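(* Let $Z\in\{0,1\}$, $S(1),S(0)\in\{0,1\}$ and a covariate vector $\mathbf{X}$ be random variables with $Z\perp\!\!\!\perp\{S(1),S(0),\mathbf{X}\}$ and observed $S=S(Z)$. Assume Monotonicity, $S(1)\ge S(0)$ almost surely. Then $\mathbf{X}\perp\!\!\!\perp U\mid\{Z=1,S=1,e_{1,u}(\mathbf{X})\}$ for $u=s\bar{s}$ and $u=ss$, and $\mathbf{X}\perp\!\!\!\perp U\mid\{Z=0,S=0,e_{0,u}(\mathbf{X})\}$ for $u=s\bar{s}$ and $u=\bar{s}\bar{s}$.
   Context: The principal stratum is $U=(S(1),S(0))$, whose values $(1,1),(1,0),(0,1),(0,0)$ are labelled $ss, s\bar{s}, \bar{s}s, \bar{s}\bar{s}$. Principal scores: $e_u(\mathbf{X}) = \Pr(U=u\mid \mathbf{X})$. Define $e_{1,s\bar{s}}(\mathbf{X}) = e_{s\bar{s}}(\mathbf{X})/\{e_{s\bar{s}}(\mathbf{X})+e_{ss}(\mathbf{X})\}$, $e_{1,ss}(\mathbf{X}) = e_{ss}(\mathbf{X})/\{e_{s\bar{s}}(\mathbf{X})+e_{ss}(\mathbf{X})\}$, $e_{0,s\bar{s}}(\mathbf{X}) = e_{s\bar{s}}(\mathbf{X})/\{e_{s\bar{s}}(\mathbf{X})+e_{\bar{s}\bar{s}}(\mathbf{X})\}$, $e_{0,\bar{s}\bar{s}}(\mathbf{X}) = e_{\bar{s}\bar{s}}(\mathbf{X})/\{e_{s\bar{s}}(\mathbf{X})+e_{\bar{s}\bar{s}}(\mathbf{X})\}$.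 Conditioning events and denominators are assumed positive. *)

(* Defs.v *)
From mathcomp Require Import all_boot all_order all_algebra.
From mathcomp Require Import all_classical all_reals all_analysis.
Set Implicit Arguments. Unset Strict Implicit. Unset Printing Implicit Defensive.
Import Order.TTheory GRing.Theory Num.Theory.
Local Open Scope classical_set_scope.
Local Open Scope ring_scope.

(* [e] is a (measurable) version of the conditional probability
   Pr(A | X = x), i.e. Pr(A, X \in B) = E[ e(X) 1{X \in B} ] for all
   measurable B. *)
Definition cond_prob_version d dx (T : measurableType d)
  (Tx : measurableType dx) (R : realType) (P : probability T R)
  (X : T -> Tx) (A : set T) (e : Tx -> R) : Prop :=
  measurable_fun setT e /\
  forall B : set Tx, measurable B ->
    P (A `&` X @^-1` B) = (\int[P]_(t in X @^-1` B) (e (X t))%:E)%E.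

(* Conditional independence of X and the discrete variable U given the
   event A together with the real random variable W:
   for every measurable B and every value u,
     Pr(X \in B, U = u | A, W) = Pr(X \in B | A, W) * Pr(U = u | A, W)  a.s.,
   where the conditional probabilities given (A, sigma(W)) are represented
   (Doob-Dynkin) as measurable [0,1]-valued functions f, g of W.
   (All three identities are stated un-normalised, i.e. multiplied by P(A).) *)
Definition cond_indep_given d dx (T : measurableType d)
  (Tx : measurableType dx) (Tu : Type) (R : realType) (P : probability T R)
  (A : set T) (W : T -> R) (X : T -> Tx) (U : T -> Tu) : Prop :=
  forall (B : set Tx) (u : Tu), measurable B ->
  exists f g : R -> R,
    [/\ measurable_fun setT f, measurable_fun setT g,
        (forall r, 0 <= f r <= 1), (forall r, 0 <= g r <= 1) &
        forall D : set R, measurable D ->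
        [/\ P (A `&` X @^-1` B `&` W @^-1` D)
              = (\int[P]_(t in A `&` W @^-1` D) (f (W t))%:E)%E,
            P (A `&` [set t | U t = u] `&` W @^-1` D)
              = (\int[P]_(t in A `&` W @^-1` D) (g (W t))%:E)%E &
            P (A `&` X @^-1` B `&` [set t | U t = u] `&` W @^-1` D)
              = (\int[P]_(t in A `&` W @^-1` D) (f (W t) * g (W t))%:E)%E]].

(* Main.v *)
Require Import Defs.
From HB Require Import structures.
From mathcomp Require Import all_boot all_order all_algebra.
From mathcomp Require Import all_classical all_reals all_analysis.
From mathcomp Require Import measurable_realfun.
From mathcomp.algebra_tactics Require Import ring lra.
Import Order.TTheory GRing.Theory Num.Theory.
Local Open Scope classical_set_scope.
Local Open Scope ring_scope.

Definition pm d dy (T : measurableType d) (Y : measurableType dy) (R : realType)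
  (P : probability T R) (V : T -> Y) (mV : measurable_fun setT V)
  (Q : set T) (mQ : measurable Q) : set Y -> \bar R :=
  fun F => P (V @^-1` F `&` Q).
Arguments pm {d dy T Y R} P {V} mV {Q} mQ.

Section pm_measure.
Context d dy (T : measurableType d) (Y : measurableType dy) (R : realType)
  (P : probability T R) (V : T -> Y) (mV : measurable_fun setT V)
  (Q : set T) (mQ : measurable Q).

Local Notation m := (pm P mV mQ).

Lemma pm_mV (F : set Y) : measurable F -> measurable (V @^-1` F).
Proof. by move=> mF; rewrite -[X in measurable X]setTI; exact: mV. Qed.

Let pm0 : m set0 = 0%E.
Proof. by rewrite /m /pm preimage_set0 set0I measure0. Qed.

Let pm_ge0 A : (0 <= m A)%E.
Proof. exact: measure_ge0. Qed.

Let pm_sigma_additive : semi_sigma_additive m.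
Proof.
move=> F mF tF mUF; rewrite /m /pm preimage_bigcup setI_bigcupl.
apply: measure_semi_sigma_additive.
- by move=> n; apply: measurableI => //; exact: pm_mV.
- apply/trivIsetP => /= i j _ _ ij.
  rewrite setIACA setIid -preimage_setI.
  by move/trivIsetP : tF => /(_ _ _ _ _ ij) ->//; rewrite preimage_set0 set0I.
- by rewrite -setI_bigcupl -preimage_bigcup; apply: measurableI => //;
    exact: pm_mV.
Qed.

HB.instance Definition _ := isMeasure.Build _ _ _ m
  pm0 pm_ge0 pm_sigma_additive.

Let pm_fin : fin_num_fun m.
Proof.
move=> A mA; rewrite ge0_fin_numE ?measure_ge0//.
apply: (@le_lt_trans _ _ (P setT)); last by rewrite probability_setT ltry.
by apply: le_measure => //; rewrite inE //; apply: measurableI => //; exact: pm_mV.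
Qed.

HB.instance Definition _ := @Measure_isFinite.Build _ _ _ m pm_fin.

End pm_measure.

Section pm_integral.
Local Open Scope ereal_scope.
Context d dy (T : measurableType d) (Y : measurableType dy) (R : realType)
  (P : probability T R) (V : T -> Y) (mV : measurable_fun setT V)
  (Q : set T) (mQ : measurable Q).
Import HBNNSimple.

Lemma ge0_pm_integral D (f : Y -> \bar R) :
  measurable D -> measurable_fun D f -> (forall y, D y -> 0 <= f y) ->
  \int[pm P mV mQ]_(y in D) f y =
  \int[P]_(x in V @^-1` D `&` Q) f (V x).
Proof.
move=> mD mf f0.
have mVD : measurable (V @^-1` D `&` Q).
  by apply: measurableI => //; exact: pm_mV.
pose f_ := nnsfun_approx mD mf.
transitivity (limn (fun n => \int[pm P mV mQ]_(x in D) (f_ n x)%:E)).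
  rewrite -monotone_convergence//.
  - apply: eq_integral => y /[!inE] yD; apply/esym/cvg_lim => //.
    exact: cvg_nnsfun_approx.
  - by move=> n; exact/measurable_EFinP/measurable_funP.
  - by move=> n y _; rewrite lee_fin.
  - by move=> y _ m n mn; rewrite lee_fin; exact/lefP/nd_nnsfun_approx.
rewrite [X in limn X](_ : _ =
    (fun n => \int[P]_(x in V @^-1` D `&` Q) (EFin \o f_ n \o V) x)).
  rewrite -monotone_convergence//; last 3 first.
    - move=> n /=; apply: measurableT_comp => //; apply: measurable_funTS.
      exact: measurableT_comp.
    - by move=> n x _ /=; rewrite lee_fin.
    - by move=> x _ m n mn; rewrite lee_fin; exact/lefP/nd_nnsfun_approx.
  apply: eq_integral => x /[!inE] [[Dx _]] /=; apply/cvg_lim => //.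
  exact: cvg_nnsfun_approx.
apply/funext => n.
have mfnphi r : measurable (V @^-1` (f_ n @^-1` [set r])).
  exact: pm_mV.
transitivity (\sum_(k \in range (f_ n))
    \int[P]_(x in V @^-1` D `&` Q) (k * \1_(V @^-1` (f_ n @^-1` [set k])) x)%:E).
  under eq_integral do rewrite fimfunE -fsumEFin//.
  rewrite ge0_integral_fsum//; last 2 first.
  - by move=> y; exact/measurable_EFinP/measurable_funM.
  - by move=> y x _; rewrite nnfun_muleindic_ge0.
  apply: eq_fsbigr => r _; rewrite integralZl_indic_nnsfun// integral_indic//=.
  rewrite (integralZl_indic _ (fun r => V @^-1` (f_ n @^-1` [set r])))//; last first.
    by move=> r0; rewrite preimage_nnfun0.
  congr (_ * _); rewrite [RHS]integral_indic// /pm; congr (P _).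
  by rewrite preimage_setI setIA.
rewrite -ge0_integral_fsum//.
- by apply: eq_integral => x _; rewrite fsumEFin// -fimfunE.
- by move=> r; exact/measurable_EFinP/measurable_funM.
- by move=> r x _; rewrite nnfun_muleindic_ge0.
Qed.

Lemma pm_integral (f : Y -> \bar R) D :
  measurable D -> measurable_fun D f ->
  \int[pm P mV mQ]_(y in D) f y =
  \int[P]_(x in V @^-1` D `&` Q) f (V x).
Proof.
move=> mD mf; rewrite integralE [RHS]integralE.
rewrite ge0_pm_integral//; last exact: measurable_funepos.
rewrite ge0_pm_integral//; last exact: measurable_funeneg.
by congr (_ - _); apply: eq_integral => x _; rewrite !unlock.
Qed.

End pm_integral.

Section dens.
Local Open Scope ereal_scope.
Context d dy (T : measurableType d) (Y : measurableType dy) (R : realType)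
  (P : probability T R) (V : T -> Y) (mV : measurable_fun setT V).

Lemma pm_dom (Q Q' : set T) (mQ : measurable Q) (mQ' : measurable Q') :
  Q `<=` Q' -> pm P mV mQ `<< pm P mV mQ'.
Proof.
move=> QQ'; apply/null_content_dominatesP => A mA A0.
apply/eqP; rewrite -measure_le0 -A0 /pm; apply: le_measure.
- by rewrite inE; apply: measurableI => //; exact: pm_mV.
- by rewrite inE; apply: measurableI => //; exact: pm_mV.
- by apply: setIS.
Qed.

End dens.

Notation RNf := Radon_Nikodym_SigmaFinite.f.

Section key.
Local Open Scope ereal_scope.
Context d dx (T : measurableType d) (Tx : measurableType dx) (Tu : Type)
  (R : realType) (P : probability T R).

Lemma key (A : set T) (mA : measurable A) (X : T -> Tx)
  (mX : measurable_fun setT X) (w : Tx -> R) (mw : measurable_fun setT w)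
  (U : T -> Tu) (u : Tu) (g : R -> R) (mg : measurable_fun setT g)
  (g01 : forall r, (0 <= g r <= 1)%R)
  (Hg : forall B', measurable B' ->
     P (A `&` [set t | U t = u] `&` X @^-1` B')
     = \int[P]_(t in A `&` X @^-1` B') (g (w (X t)))%:E)
  (B : set Tx) : measurable B ->
  exists f g : R -> R,
    [/\ measurable_fun setT f, measurable_fun setT g,
        (forall r, (0 <= f r <= 1)%R), (forall r, (0 <= g r <= 1)%R) &
        forall D : set R, measurable D ->
        [/\ P (A `&` X @^-1` B `&` (fun t => w (X t)) @^-1` D)
              = (\int[P]_(t in A `&` (fun t => w (X t)) @^-1` D) (f (w (X t)))%:E),
            P (A `&` [set t | U t = u] `&` (fun t => w (X t)) @^-1` D)
              = (\int[P]_(t in A `&` (fun t => w (X t)) @^-1` D) (g (w (X t)))%:E) &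
            P (A `&` X @^-1` B `&` [set t | U t = u] `&` (fun t => w (X t)) @^-1` D)
              = (\int[P]_(t in A `&` (fun t => w (X t)) @^-1` D) (f (w (X t)) * g (w (X t)))%:E)]].
Proof.
move=> mB.
set W := fun t => w (X t).
have mW : measurable_fun setT W by exact: measurableT_comp.
have mXB : measurable (X @^-1` B) by exact: pm_mV.
have mE1 : measurable (A `&` X @^-1` B) by exact: measurableI.
have mE2 : measurable (A `&` ~` (X @^-1` B)).
  by apply: measurableI => //; exact: measurableC.
pose mu := pm P mW mA.
pose nu1 := pm P mW mE1.
pose nu2 := pm P mW mE2.
have dom1 : nu1 `<< mu by apply: pm_dom; exact: subIsetl.
have dom2 : nu2 `<< mu by apply: pm_dom; exact: subIsetl.
pose d1 := RNf nu1 mu.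
pose d2 := RNf nu2 mu.
have d1_ge0 := Radon_Nikodym_SigmaFinite.f_ge0 dom1.
have d2_ge0 := Radon_Nikodym_SigmaFinite.f_ge0 dom2.
have d1_fin := Radon_Nikodym_SigmaFinite.f_fin_num dom1.
have d2_fin := Radon_Nikodym_SigmaFinite.f_fin_num dom2.
have d1_int := Radon_Nikodym_SigmaFinite.f_integrable dom1.
have d2_int := Radon_Nikodym_SigmaFinite.f_integrable dom2.
have d1E := Radon_Nikodym_SigmaFinite.f_integral dom1.
have d2E := Radon_Nikodym_SigmaFinite.f_integral dom2.
have md1 : measurable_fun setT d1 := measurable_int _ d1_int.
have md2 : measurable_fun setT d2 := measurable_int _ d2_int.
have sum1 : ae_eq mu setT (d1 \+ d2) (cst 1).
  apply: integral_ae_eq => //; first exact: integrableD.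
  move=> E _ mE.
  rewrite ge0_integralD//; [|exact: measurable_funTS..].
  rewrite -d1E// -d2E// integral_cst// mul1e /nu1 /nu2 /mu /pm.
  change (P (W @^-1` E `&` (A `&` X @^-1` B)) + P (W @^-1` E `&` (A `&` ~` (X @^-1` B))) = P (W @^-1` E `&` A)).
  rewrite (_ : W @^-1` E `&` A = (W @^-1` E `&` (A `&` X @^-1` B))
     `|` (W @^-1` E `&` (A `&` ~` (X @^-1` B)))); last first.
    by rewrite -setIUr -setIUr setUCr setIT.
  rewrite measureU//.
  - by apply: measurableI => //; exact: pm_mV.
  - by apply: measurableI => //; exact: pm_mV.
  - by rewrite setIACA -setIA setIACA setICr !setI0.
pose f := fun r => Num.min (fine (d1 r)) 1%R.
have mf : measurable_fun setT f.
  apply: measurable_minr => //.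
  by apply: measurableT_comp => //; exact: fine_measurable.
have f01 : forall r, (0 <= f r <= 1)%R.
  move=> r; apply/andP; split.
    by rewrite /f le_min fine_ge0 ?d1_ge0 ?ler01.
  by rewrite /f minEle; case: ifPn.
have d1f : ae_eq mu setT d1 (fun r => (f r)%:E).
  apply: filterS sum1 => r /(_ I) /= h _.
  have e : (fine (d1 r) + fine (d2 r) = 1)%R.
    by apply: EFin_inj; rewrite EFinD !fineK.
  have h1 : (fine (d1 r) <= 1)%R.
    by rewrite -e lerDl fine_ge0.
  by rewrite /f minEle h1 fineK.
have d1fD D : ae_eq mu D d1 (fun r => (f r)%:E).
  by apply: filterS d1f => r /(_ I) h _.
have mwD D : measurable D -> measurable (w @^-1` D) by move=> mD; exact: pm_mV.
exists f, g; split => // D mD; split.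
- transitivity (\int[mu]_(r in D) d1 r).
    by rewrite setIC; exact: (d1E D mD).
  rewrite (ae_eq_integral (fun r => (f r)%:E) d1)//; last 2 first.
  + exact: measurable_funTS.
  + by apply/measurable_EFinP; exact: measurable_funTS.
  rewrite ge0_pm_integral//; last 2 first.
  + by apply/measurable_EFinP; exact: measurable_funTS.
  + by move=> y _; rewrite lee_fin; case/andP: (f01 y).
  by rewrite setIC.
- exact: (Hg _ (mwD _ mD)).
- transitivity (P (A `&` [set t | U t = u] `&` X @^-1` (B `&` w @^-1` D))).
    congr (P _); apply/seteqP; split => t /=.
    + by move=> [[[a b] c] e]; do !split.
    + by move=> [[a c] [b e]]; do !split.
  rewrite Hg; last by apply: measurableI => //; exact: mwD.
  transitivity (\int[nu1]_(r in D) (g r)%:E).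
    rewrite ge0_pm_integral//; last 2 first.
    + by apply/measurable_EFinP; exact: measurable_funTS.
    + by move=> y _; rewrite lee_fin; case/andP: (g01 y).
    rewrite (_ : A `&` X @^-1` (B `&` w @^-1` D) = W @^-1` D `&` (A `&` X @^-1` B))//.
    by apply/seteqP; split => t /=; [move=> [a [b c]]|move=> [c [a b]]].
  rewrite -(Radon_Nikodym_SigmaFinite.change_of_variables dom1)//; last 2 first.
  + by move=> y; rewrite lee_fin; case/andP: (g01 y).
  + by apply/measurable_EFinP; exact: measurable_funTS.
  rewrite (ae_eq_integral (fun r => (g r)%:E * (f r)%:E))//; last 3 first.
  + apply: emeasurable_funM; last exact: measurable_funTS.
    by apply/measurable_EFinP; exact: measurable_funTS.
  + by apply: emeasurable_funM; apply/measurable_EFinP; exact: measurable_funTS.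
  + exact: ae_eqe_mul2l.
  rewrite ge0_pm_integral//; last 2 first.
  + by apply: emeasurable_funM; apply/measurable_EFinP; exact: measurable_funTS.
  + move=> y _; rewrite mule_ge0// lee_fin.
    * by case/andP: (g01 y).
    * by case/andP: (f01 y).
  rewrite setIC; apply: eq_integral => t _.
  by rewrite -EFinM mulrC.
Qed.
End key.


Definition clip (R : realType) (r : R) : R := Num.min (Num.max r 0) 1.
Arguments clip {R}.

Lemma clip01 (R : realType) (r : R) : 0 <= clip r <= 1.
Proof.
rewrite /clip; apply/andP; split.
  by rewrite le_min le_max lexx orbT ler01.
by rewrite minEle; case: ifPn.
Qed.

Lemma clipE (R : realType) (r : R) : 0 <= r <= 1 -> clip r = r.
Proof.
case/andP => r0 r1; rewrite /clip maxEle.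
case: ifPn => [r0'|_]; last by rewrite minEle r1.
have -> : r = 0 by apply/eqP; rewrite eq_le r0' r0.
by rewrite minEle ler01.
Qed.

Lemma clip_meas (R : realType) : measurable_fun setT (@clip R).
Proof.
rewrite /clip; apply: measurable_minr => //.
exact: measurable_maxr.
Qed.

Lemma ident (R : realType) (a b : R) : 0 <= a -> 0 <= b -> 0 < a + b ->
  [/\ clip (a / (a + b)) * (a + b) = a,
      clip (1 - a / (a + b)) * (a + b) = b,
      clip (b / (a + b)) * (a + b) = b &
      clip (1 - b / (a + b)) * (a + b) = a].
Proof.
move=> a0 b0 s0.
have sn : a + b != 0 by rewrite gt_eqF.
have ha : 0 <= a / (a + b) <= 1.
  apply/andP; split; first by rewrite divr_ge0// ltW.
  by rewrite ler_pdivrMr// mul1r lerDl.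
have hb : 0 <= b / (a + b) <= 1.
  apply/andP; split; first by rewrite divr_ge0// ltW.
  by rewrite ler_pdivrMr// mul1r lerDr.
have ha' : 0 <= 1 - a / (a + b) <= 1.
  by case/andP: ha => h1 h2; rewrite subr_ge0 h2 lerBlDr lerDl h1.
have hb' : 0 <= 1 - b / (a + b) <= 1.
  by case/andP: hb => h1 h2; rewrite subr_ge0 h2 lerBlDr lerDl h1.
rewrite !clipE//; split; field; exact: sn.
Qed.

Lemma measurable_inv (R : realType) : measurable_fun setT (@GRing.inv R).
Proof.
have -> : [set: R] = ~` [set 0%R] `|` [set 0%R] by rewrite setUC setUv.
apply/measurable_funU => //; first exact: measurableC.
split.
- apply: open_continuous_measurable_fun.
  + rewrite openC; apply: accessible_closed_set1.
    exact: hausdorff_accessible.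
  + move=> x /[!inE] /= x0; apply: inv_continuous; exact/eqP.
- move=> _ Y mY; have [Y0|Y0] := pselect (Y (0%R^-1)).
  + rewrite (_ : _ `&` _ = [set 0%R])//; apply/seteqP; split => x /=.
      by case.
    by move=> ->.
  + rewrite (_ : _ `&` _ = set0)//; apply/seteqP; split => x //=.
    by case=> -> /Y0.
Qed.

Section hg.
Local Open Scope ereal_scope.
Context d dx (T : measurableType d) (Tx : measurableType dx) (R : realType)
  (P : probability T R) (Z S1 S0 : T -> bool) (X : T -> Tx)
  (e : bool * bool -> Tx -> R).
Hypotheses (mZ : forall b, measurable [set t | Z t = b])
  (mS1 : forall b, measurable [set t | S1 t = b])
  (mS0 : forall b, measurable [set t | S0 t = b])
  (mX : measurable_fun setT X)
  (indep : forall (z : bool) (C : set (bool * bool * Tx)), measurable C ->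
     P ([set t | Z t = z] `&` ((fun t => (S1 t, S0 t, X t)) @^-1` C))
     = (P [set t | Z t = z] * P ((fun t => (S1 t, S0 t, X t)) @^-1` C)))
  (cpv : forall u, cond_prob_version P X [set t | (S1 t, S0 t) = u] (e u)).

Lemma mU uu : measurable [set t | (S1 t, S0 t) = uu].
Proof.
rewrite (_ : [set t | (S1 t, S0 t) = uu] = [set t | S1 t = uu.1] `&` [set t | S0 t = uu.2]).
  exact: measurableI.
apply/seteqP; split => t /=; first by move=> <-.
by case: uu => a b /= [-> ->].
Qed.

Lemma indepU z uu F : measurable F ->
  P ([set t | Z t = z] `&` [set t | (S1 t, S0 t) = uu] `&` X @^-1` F) =
  P [set t | Z t = z] * P (X @^-1` F `&` [set t | (S1 t, S0 t) = uu]).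
Proof.
move=> mF.
have mC : measurable ([set uu] `*` F : set (bool * bool * Tx)).
  apply: measurableX => //.
  rewrite (_ : [set uu] = [set uu.1] `*` [set uu.2]).
    exact: measurableX.
  by apply/seteqP; split => -[a b] /=; [move=> <-|case: uu => ? ? /= [-> ->]].
have := indep z _ mC.
rewrite (_ : _ @^-1` _ = X @^-1` F `&` [set t | (S1 t, S0 t) = uu]); last first.
  by apply/seteqP; split => t /=; case.
move=> <-; congr (P _); apply/seteqP; split => t /=.
- by move=> [[a b] c].
- by move=> [a [b c]].
Qed.

Local Notation PX := (pm P mX (@measurableT _ T)).
Local Notation dU uu := (RNf (pm P mX (mU uu)) PX).

Lemma domU uu : pm P mX (mU uu) `<< PX.
Proof. by apply: pm_dom; exact: subsetT. Qed.

Lemma dens_e uu : ae_eq PX setT (dU uu) (fun x => (e uu x)%:E).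
Proof.
have [me cpe] := cpv uu.
apply: integral_ae_eq => //.
- exact: Radon_Nikodym_SigmaFinite.f_integrable (domU uu).
- exact/measurable_EFinP.
move=> E _ mE.
rewrite -(Radon_Nikodym_SigmaFinite.f_integral (domU uu))//.
change (P (X @^-1` E `&` [set t | (S1 t, S0 t) = uu]) =
  \int[PX]_(x in E) (e uu x)%:E).
rewrite pm_integral//; last exact/measurable_EFinP/measurable_funTS.
by rewrite setIT setIC cpe.
Qed.

Lemma hg z u1 u2 (hu : u1 != u2) (A : set T) (mA : measurable A)
  (hA : A = [set t | Z t = z /\ ((S1 t, S0 t) = u1 \/ (S1 t, S0 t) = u2)])
  (w : Tx -> R) (mw : measurable_fun setT w) (g : R -> R)
  (mg : measurable_fun setT g) (g0 : forall r, (0 <= g r)%R)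
  u (hu' : u = u1 \/ u = u2)
  (hid : forall x, (0 <= e u1 x)%R -> (0 <= e u2 x)%R ->
     (g (w x) * (e u1 x + e u2 x) = e u x)%R)
  B' : measurable B' ->
  P (A `&` [set t | (S1 t, S0 t) = u] `&` X @^-1` B') =
  \int[P]_(t in A `&` X @^-1` B') (g (w (X t)))%:E.
Proof.
move=> mB'.
have mXB : measurable (X @^-1` B') by exact: pm_mV.
pose MA := pm P mX mA.
have domA : MA `<< PX by apply: pm_dom; exact: subsetT.
pose dA := RNf MA PX.
have dA_int := Radon_Nikodym_SigmaFinite.f_integrable domA.
have dAE := Radon_Nikodym_SigmaFinite.f_integral domA.
have dU_ge0 uu := Radon_Nikodym_SigmaFinite.f_ge0 (domU uu).
have dU_int uu := Radon_Nikodym_SigmaFinite.f_integrable (domU uu).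
have dU_E uu := Radon_Nikodym_SigmaFinite.f_integral (domU uu).
have mdU uu : measurable_fun setT (dU uu) := measurable_int _ (dU_int uu).
set c := P [set t | Z t = z].
have cfin : c \is a fin_num := fin_num_measure P _ (mZ z).
have c0 : 0 <= c by exact: measure_ge0.
have eqZ uu : (uu = u1 \/ uu = u2) ->
    A `&` [set t | (S1 t, S0 t) = uu] =
    [set t | Z t = z] `&` [set t | (S1 t, S0 t) = uu].
  move=> huu; rewrite hA; apply/seteqP; split => t /=.
    by move=> [[? _] ?].
  by move=> [zt ut]; split => //; split => //; case: huu => <-; [left|right].
have dAc : ae_eq PX setT dA (fun x => c * (dU u1 x + dU u2 x)).
  apply: integral_ae_eq => //.
    by apply: emeasurable_funM => //; exact: emeasurable_funD.
  move=> E _ mE.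
  rewrite -dAE//.
  rewrite ge0_integralZl//; last 2 first.
  - by apply: emeasurable_funD; exact: measurable_funTS.
  - by move=> x _; rewrite adde_ge0 ?dU_ge0.
  rewrite ge0_integralD//; try (by move=> x _; exact: dU_ge0); try exact: measurable_funTS.
  rewrite -(dU_E u1 E mE) -(dU_E u2 E mE).
  change (P (X @^-1` E `&` A) =
    c * (P (X @^-1` E `&` [set t | (S1 t, S0 t) = u1]) +
         P (X @^-1` E `&` [set t | (S1 t, S0 t) = u2]))).
  rewrite ge0_muleDr ?measure_ge0//.
  rewrite -!indepU//.
  rewrite -(eqZ u1 (or_introl erefl)) -(eqZ u2 (or_intror erefl)).
  rewrite (_ : X @^-1` E `&` A = (A `&` [set t | (S1 t, S0 t) = u1] `&` X @^-1` E)
     `|` (A `&` [set t | (S1 t, S0 t) = u2] `&` X @^-1` E)); last first.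
    rewrite hA; apply/seteqP; split => t /=.
      move=> [Et [zt [h|h]]]; [left|right]; split => //; split => //; split => //; first [by left|by right].
    by move=> [[[[zt h] _] Et]|[[[zt h] _] Et]]; exact: (conj Et (conj zt h)).
  rewrite measureU//.
  - by apply: measurableI; [apply: measurableI => //; exact: mU|exact: pm_mV].
  - by apply: measurableI; [apply: measurableI => //; exact: mU|exact: pm_mV].
  - apply/seteqP; split => t //= [[[_ h1] _] [[_ h2] _]].
    by move: hu; rewrite -h1 -h2 eqxx.
rewrite (eqZ u hu') indepU//.
transitivity (c * \int[PX]_(x in B') dU u x).
  by congr (_ * _); exact: (dU_E u B' mB').
rewrite -ge0_integralZl//; last 2 first.
- exact: measurable_funTS.
- by move=> x _; exact: dU_ge0.
transitivity (\int[PX]_(x in B') ((g (w x))%:E * dA x)).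
  apply: ae_eq_integral => //.
  - by apply: emeasurable_funM => //; exact: measurable_funTS.
  - apply: emeasurable_funM.
      by apply/measurable_EFinP; apply: measurable_funTS; exact: measurableT_comp.
    exact/measurable_funTS/(measurable_int _ dA_int).
  have h12 := filterS2 (ae_filter_ringOfSetsType _) (fun x a b => conj a b) (dens_e u1) (dens_e u2).
  have h34 := filterS2 (ae_filter_ringOfSetsType _) (fun x a b => conj a b) dAc (dens_e u).
  have h1234 := filterS2 (ae_filter_ringOfSetsType _) (fun x a b => conj a b) h12 h34.
  apply: filterS h1234 => x [[h1 h2] [h3 h4]] Bx.
  have e1p : (0 <= e u1 x)%R by rewrite -lee_fin -(h1 I) dU_ge0.
  have e2p : (0 <= e u2 x)%R by rewrite -lee_fin -(h2 I) dU_ge0.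
  rewrite (h3 I) (h1 I) (h2 I) (h4 I) -(fineK cfin) -EFinD -!EFinM.
  by rewrite mulrCA hid.
rewrite (Radon_Nikodym_SigmaFinite.change_of_variables domA)//; last 2 first.
- by move=> y; rewrite lee_fin.
- by apply/measurable_EFinP; apply: measurable_funTS; exact: measurableT_comp.
rewrite ge0_pm_integral//; last 2 first.
- by apply/measurable_EFinP; apply: measurable_funTS; exact: measurableT_comp.
- by move=> y _; rewrite lee_fin.
by rewrite setIC.
Qed.

Lemma conj_lemma z u1 u2 (hu : u1 != u2) (A : set T) (mA : measurable A)
  (hA : A = [set t | Z t = z /\ ((S1 t, S0 t) = u1 \/ (S1 t, S0 t) = u2)])
  (w : Tx -> R) (mw : measurable_fun setT w) (g1 g2 : R -> R)
  (mg1 : measurable_fun setT g1) (mg2 : measurable_fun setT g2)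
  (g1_01 : forall r, (0 <= g1 r <= 1)%R) (g2_01 : forall r, (0 <= g2 r <= 1)%R)
  (id1 : forall x, (0 <= e u1 x)%R -> (0 <= e u2 x)%R ->
     (g1 (w x) * (e u1 x + e u2 x) = e u1 x)%R)
  (id2 : forall x, (0 <= e u1 x)%R -> (0 <= e u2 x)%R ->
     (g2 (w x) * (e u1 x + e u2 x) = e u2 x)%R) :
  cond_indep_given P A (fun t => w (X t)) X (fun t => (S1 t, S0 t)).
Proof.
move=> B u mB.
have [g [mg g01 Hg]] : exists g : R -> R, [/\ measurable_fun setT g,
    (forall r, (0 <= g r <= 1)%R) &
    forall B', measurable B' ->
      P (A `&` [set t | (S1 t, S0 t) = u] `&` X @^-1` B') =
      \int[P]_(t in A `&` X @^-1` B') (g (w (X t)))%:E].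
  have [->|n1] := eqVneq u u1.
    exists g1; split => // B' mB'.
    apply: (@hg z u1 u2 hu A mA hA w mw g1 mg1 _ u1 (or_introl erefl) id1 B' mB').
    by move=> r; case/andP: (g1_01 r).
  have [->|n2] := eqVneq u u2.
    exists g2; split => // B' mB'.
    apply: (@hg z u1 u2 hu A mA hA w mw g2 mg2 _ u2 (or_intror erefl) id2 B' mB').
    by move=> r; case/andP: (g2_01 r).
  exists (fun=> 0%R); split => //.
    by move=> r; rewrite lexx ler01.
  move=> B' mB'.
  rewrite (_ : A `&` [set t | (S1 t, S0 t) = u] = set0); last first.
    rewrite hA; apply/seteqP; split => t //= [[_ [h|h]] hu0].
    - by move: n1; rewrite -hu0 h eqxx.
    - by move: n2; rewrite -hu0 h eqxx.
  by rewrite set0I measure0 integral0_eq.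
exact: (@key _ _ _ _ _ _ P A mA X mX w mw (fun t => (S1 t, S0 t)) u g mg g01 Hg B mB).
Qed.

End hg.

Theorem lemmaA6 (d dx : measure_display) (T : measurableType d)
  (Tx : measurableType dx) (R : realType) (P : probability T R)
  (Z S1 S0 : T -> bool) (X : T -> Tx) (e : bool * bool -> Tx -> R) :
  (forall b, measurable [set t | Z t = b]) ->
  (forall b, measurable [set t | S1 t = b]) ->
  (forall b, measurable [set t | S0 t = b]) ->
  measurable_fun setT X ->
  (* Z independent of {S(1), S(0), X} *)
  (forall (z : bool) (C : set (bool * bool * Tx)), measurable C ->
     P ([set t | Z t = z] `&` ((fun t => (S1 t, S0 t, X t)) @^-1` C))
     = (P [set t | Z t = z] * P ((fun t => (S1 t, S0 t, X t)) @^-1` C))%E) ->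
  (* Monotonicity: S(1) >= S(0) almost surely *)
  {ae P, forall t, S0 t ==> S1 t} ->
  (* principal scores *)
  (forall u, cond_prob_version P X [set t | (S1 t, S0 t) = u] (e u)) ->
  (* conditioning events and denominators positive *)
  (0 < P [set t | Z t = true /\ (if Z t then S1 t else S0 t) = true])%E ->
  (0 < P [set t | Z t = false /\ (if Z t then S1 t else S0 t) = false])%E ->
  (forall x, 0 < e (true, false) x + e (true, true) x) ->
  (forall x, 0 < e (true, false) x + e (false, false) x) ->
  let U := fun t => (S1 t, S0 t) in
  let S := fun t => if Z t then S1 t else S0 t in
  let A1 := [set t | Z t = true /\ S t = true] in
  let A0 := [set t | Z t = false /\ S t = false] in
  let e1 u x := e u x / (e (true, false) x + e (true, true) x) in
  let e0 u x := e u x / (e (true, false) x + e (false, false) x) in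
  [/\ cond_indep_given P A1 (fun t => e1 (true, false) (X t)) X U,
      cond_indep_given P A1 (fun t => e1 (true, true) (X t)) X U,
      cond_indep_given P A0 (fun t => e0 (true, false) (X t)) X U &
      cond_indep_given P A0 (fun t => e0 (false, false) (X t)) X U].
Proof.
move=> mZ mS1 mS0 mX indep _ cpv _ _ pos1 pos0 U S A1 A0 e1 e0.
have me u : measurable_fun setT (e u) by case: (cpv u).
have hA1 : A1 = [set t | Z t = true /\
    ((S1 t, S0 t) = (true, false) \/ (S1 t, S0 t) = (true, true))].
  rewrite /A1 /S; apply/seteqP; split => t /=.
  - by case=> zt; rewrite zt => s1; split=> //; rewrite s1; case: (S0 t); [right|left].
  - by case=> zt h; split=> //; rewrite zt; case: h => -[-> _].
have hA0 : A0 = [set t | Z t = false /\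
    ((S1 t, S0 t) = (true, false) \/ (S1 t, S0 t) = (false, false))].
  rewrite /A0 /S; apply/seteqP; split => t /=.
  - by case=> zt; rewrite zt => s0; split=> //; rewrite s0; case: (S1 t); [left|right].
  - by case=> zt h; split=> //; rewrite zt; case: h => -[_ ->].
have mA1 : measurable A1.
  rewrite hA1.
  change (measurable ([set t | Z t = true] `&` ([set t | (S1 t, S0 t) = (true, false)] `|` [set t | (S1 t, S0 t) = (true, true)]))).
  apply: measurableI => //; apply: measurableU; exact: (@mU _ _ S1 S0 mS1 mS0).
have mA0 : measurable A0.
  rewrite hA0.
  change (measurable ([set t | Z t = false] `&` ([set t | (S1 t, S0 t) = (true, false)] `|` [set t | (S1 t, S0 t) = (false, false)]))).
  apply: measurableI => //; apply: measurableU; exact: (@mU _ _ S1 S0 mS1 mS0).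
have me1 u : measurable_fun setT (e1 u).
  rewrite /e1; apply: measurable_funM => //.
  apply: measurableT_comp; first exact: measurable_inv.
  exact: measurable_funD.
have me0 u : measurable_fun setT (e0 u).
  rewrite /e0; apply: measurable_funM => //.
  apply: measurableT_comp; first exact: measurable_inv.
  exact: measurable_funD.
have mc : measurable_fun setT (@clip R) := clip_meas R.
have mc' : measurable_fun setT (fun r : R => clip (1 - r)).
  apply: measurableT_comp => //; exact: measurable_funB.
have c01 (r : R) : 0 <= @clip R r <= 1 := clip01 _ r.
have c01' (r : R) : 0 <= clip (1 - r) <= 1 := clip01 _ (1 - r).
split.
- refine (@conj_lemma _ _ _ _ _ P Z S1 S0 X e mZ mS1 mS0 mX indep cpv true
    (true, false) (true, true) isT A1 mA1 hA1 (e1 (true, false)) (me1 _)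
    clip (fun r => clip (1 - r)) mc mc' c01 c01' _ _).
  + by move=> x a0 b0; have [] := ident _ _ _ a0 b0 (pos1 x).
  + by move=> x a0 b0; have [] := ident _ _ _ a0 b0 (pos1 x).
- refine (@conj_lemma _ _ _ _ _ P Z S1 S0 X e mZ mS1 mS0 mX indep cpv true
    (true, false) (true, true) isT A1 mA1 hA1 (e1 (true, true)) (me1 _)
    (fun r => clip (1 - r)) clip mc' mc c01' c01 _ _).
  + by move=> x a0 b0; have [] := ident _ _ _ a0 b0 (pos1 x).
  + by move=> x a0 b0; have [] := ident _ _ _ a0 b0 (pos1 x).
- refine (@conj_lemma _ _ _ _ _ P Z S1 S0 X e mZ mS1 mS0 mX indep cpv false
    (true, false) (false, false) isT A0 mA0 hA0 (e0 (true, false)) (me0 _)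
    clip (fun r => clip (1 - r)) mc mc' c01 c01' _ _).
  + by move=> x a0 b0; have [] := ident _ _ _ a0 b0 (pos0 x).
  + by move=> x a0 b0; have [] := ident _ _ _ a0 b0 (pos0 x).
- refine (@conj_lemma _ _ _ _ _ P Z S1 S0 X e mZ mS1 mS0 mX indep cpv false
    (true, false) (false, false) isT A0 mA0 hA0 (e0 (false, false)) (me0 _)
    (fun r => clip (1 - r)) clip mc' mc c01' c01 _ _).
  + by move=> x a0 b0; have [] := ident _ _ _ a0 b0 (pos0 x).
  + by move=> x a0 b0; have [] := ident _ _ _ a0 b0 (pos0 x).
Qed.
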